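(* Let $q$ be a prime power, $d\ge5$, $\mathcal C$ the $[q+1,q+2-d,d]_q$ normalized GDRS code, and $\mathcal V^{(2)}$ a coset of weight $2$ of $\mathcal C$ with leader $\mathbf v_2(j_1,j_2;\gamma_1,\gamma_2)$. Let $\beta$ be a primitive element of $\mathbb F_q$, $\gamma=-\gamma_2/\gamma_1$, and $\lambda(\gamma)\in\mathbb Z_{q-1}$ with $\beta^{\lambda(\gamma)}=\gamma$. Write $P=\mathrm P^+_{q-1,d-2}(\lambda(\gamma))$ (with $t$ an integer). Then: (1) $q=3t+1\ge7$, $d=5$: $P=\frac13\left(\binom{q-2}{2}-1\right)+1$ if $\lambda(\gamma)\equiv0\pmod3$, else $P=\frac13\left(\binom{q-2}{2}-1\right)$. (2) $q=4t+3\ge7$, $d=6$: $P=\frac14\left(\binom{q-2}{3}+\frac{q-3}{2}\right)$ if $\lambda(\gamma)\equiv0\pmod2$, else $P=\frac14\left(\binom{q-2}{3}-\frac{q-3}{2}\right)$. (3) $q=5t+1\ge11$, $d=7$: $P=\frac15\left(\binom{q-2}{4}-1\right)+1$ if $\lambda(\gamma)\equiv0\pmod5$, else $P=\frac15\left(\binom{q-2}{4}-1\right)$. (4) $q=6t+3\ge9$ or $q=6t+5\ge11$, $d=8$: $P=\frac16\left(\binom{q-2}{5}-\binom{(q-3)/2}{2}\right)$ if $\lambda(\gamma)\equiv0\pmod2$, else $P=\frac16\left(\binom{q-2}{5}+\binom{(q-3)/2}{2}\right)$. (5) $q=6t+4\ge10$, $d=8$: $P=\frac13\left(\frac12\binom{q-2}{5}+\frac{q-4}{3}\right)$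 if $\lambda(\gamma)\equiv0\pmod3$, else $P=\frac16\left(\binom{q-2}{5}-\frac{q-4}{3}\right)$. (6) $q=7t+1\ge29$, $d=9$: $P=\frac17\left(\binom{q-2}{6}-1\right)+1$ if $\lambda(\gamma)\equiv0\pmod7$, else $P=\frac17\left(\binom{q-2}{6}-1\right)$. (7) $q=4t+7\ge11$, $d=10$: $P=\frac18\left(\binom{q-2}{7}+\binom{(q-3)/2}{3}\right)$ if $\lambda(\gamma)\equiv0\pmod2$, else $P=\frac18\left(\binom{q-2}{7}-\binom{(q-3)/2}{3}\right)$. (8) $q=9t+4\ge13$ or $q=9t+7\ge16$, $d=11$: $P=\frac19\left(\binom{q-2}{8}+2\binom{(q-4)/3}{2}\right)$ if $\lambda(\gamma)\equiv0\pmod3$, else $P=\frac19\left(\binom{q-2}{8}-\binom{(q-4)/3}{2}\right)$. (9) $q=4t+1\ge9$, $d=6$: $P=\frac14\left(\binom{q-2}{3}+\frac{q-7}{2}\right)$ if $\lambda(\gamma)\equiv0\pmod4$; $P=\frac14\left(\binom{q-2}{3}-\frac{q-3}{2}\right)$ if $\lambda(\gamma)\equiv1\pmod2$; $P=\frac14\left(\binom{q-2}{3}+\frac{q+1}{2}\right)$ if $\lambda(\gamma)\equiv2\pmod4$.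
   Context: Normalized GDRS code: the $\mathbb F_q$-linear code of length $q+1$ which is the kernel of the $(d-1)\times(q+1)$ matrix whose first $q$ columns are $(1,m,\dots,m^{d-2})^T$, $m$ running over $\mathbb F_q$, and whose last column is $(0,\dots,0,1)^T$. A coset of weight $2$ is a coset of minimum Hamming weight $2$; $\mathbf v_2(j_1,j_2;\gamma_1,\gamma_2)$ is the vector with $\gamma_1,\gamma_2\in\mathbb F_q^*$ in positions $j_1\ne j_2$ and zeros elsewhere. For positive integers $\mu<R$ and $\lambda\in\mathbb Z_R$ (integers mod $R$), $\mathrm P^+_{R,\mu}(\lambda)$ is the number of $\mu$-element subsets of $\mathbb Z_R$ (distinct elements) whose sum in $\mathbb Z_R$ is $\lambda$. (By the paper's results, $P$ equals the number of weight-$(d-2)$ vectors in $\mathcal V^{(2)}$.) *)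

(* Defs.v *)
From HB Require Import structures.
From mathcomp Require Import all_boot all_order all_algebra.
Set Implicit Arguments. Unset Strict Implicit. Unset Printing Implicit Defensive.
Import GRing.Theory.
Local Open Scope ring_scope.

(* Positions of the length-(q+1) code: [Some m] for m in F (first q columns),
   [None] for the last column (0,...,0,1)^T. *)
Notation vecF F := {ffun option F -> F}.

(* The normalized GDRS code: kernel of the (d-1) x (q+1) parity-check matrix
   with columns (1,m,...,m^(d-2))^T (m in F) and (0,...,0,1)^T. *)
Definition in_gdrs (F : finFieldType) (d : nat) (c : vecF F) : Prop :=
  forall i : 'I_d.-1,
    \sum_(m : F) c (Some m) * m ^+ i + (if val i == d.-2 then c None else 0) = 0.

Definition wt (F : finFieldType) (v : vecF F) : nat := #|[set x | v x != 0]|.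

Definition v2 (F : finFieldType) (j1 j2 : option F) (g1 g2 : F) : vecF F :=
  [ffun x => if x == j1 then g1 else if x == j2 then g2 else 0].

Definition coset_weight (F : finFieldType) (d : nat) (v : vecF F) (w : nat) : Prop :=
  (exists2 c, in_gdrs d c & wt (v + c)%R = w) /\
  (forall c, in_gdrs d c -> (w <= wt (v + c)%R)%N).

Definition Pplus (R mu lam : nat) : nat :=
  #|[set S : {set 'I_R} | (#|S| == mu) && ((\sum_(i in S) val i) %% R == lam %% R)%N]|.

(* Main.v *)
Require Import Defs.
From HB Require Import structures.
From mathcomp Require Import all_boot all_order all_algebra.
From mathcomp Require Import zify ring lra.
Set Implicit Arguments. Unset Strict Implicit. Unset Printing Implicit Defensive.
Import GRing.Theory Num.Theory.
Local Open Scope ring_scope.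


Lemma card_bij (A B : finType) (f : A -> B) (g : B -> A) :
  cancel f g -> cancel g f -> forall Q : pred B,
  #|[set x | Q (f x)]| = #|[set y | Q y]|.
Proof.
move=> fK gK Q; rewrite -(card_imset _ (can_inj fK)); apply: eq_card => y.
rewrite inE; apply/imsetP/idP => [[x]|Qy].
  by rewrite inE => Qx ->.
by exists (g y); rewrite ?inE gK.
Qed.

Lemma card_bij_sets (A B : finType) (f : A -> B) (g : B -> A) :
  cancel f g -> cancel g f -> forall Q : pred {set B},
  #|[set S : {set A} | Q (f @: S)]| = #|[set T : {set B} | Q T]|.
Proof.
move=> fK gK Q.
have h1 : cancel (fun S : {set A} => f @: S) (fun T : {set B} => g @: T).
  move=> S; rewrite -imset_comp (@eq_imset _ _ _ id) ?imset_id //.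
have h2 : cancel (fun T : {set B} => g @: T) (fun S : {set A} => f @: S).
  move=> S; rewrite -imset_comp (@eq_imset _ _ _ id) ?imset_id //.
by rewrite -(@card_bij _ _ _ _ h1 h2 Q).
Qed.

Lemma val_sumZp m (I : finType) (S : pred I) (f : I -> 'I_m.+1) :
  val (\sum_(i in S) f i) = ((\sum_(i in S) val (f i)) %% m.+1)%N.
Proof.
apply: (big_rec2 (fun (x : 'I_m.+1) n => val x = (n %% m.+1)%N)).
  by rewrite mod0n.
by move=> i x n _ Kx; rewrite /= Kx modnDmr.
Qed.

Definition Nc R2 k (a : 'I_R2.+2) :=
  #|[set S : {set 'I_R2.+2} | (#|S| == k) && (\sum_(i in S) i == a)]|.

Lemma sum_shift R2 (S : {set 'I_R2.+2}) t :
  \sum_(i in [set x + t | x in S]) i = \sum_(i in S) i + t *+ #|S|.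
Proof.
rewrite big_imset /=; last by move=> x y _ _; apply: addIr.
by rewrite big_split /= sumr_const.
Qed.

Lemma Nc_shift R2 k (a t : 'I_R2.+2) : Nc k a = Nc k (a + t *+ k).
Proof.
rewrite /Nc.
have h1 : cancel (fun x : 'I_R2.+2 => x + t) (fun x => x - t) by move=> x; rewrite addrK.
have h2 : cancel (fun x : 'I_R2.+2 => x - t) (fun x => x + t) by move=> x; rewrite subrK.
apply: (etrans _ (@card_bij_sets _ _ _ _ h1 h2 (fun T => (#|T| == k) && (\sum_(i in T) i == a + t *+ k)))).
apply: eq_card => S; rewrite !inE card_imset; last exact: addIr.
rewrite sum_shift; case: eqP => // ->.
by rewrite (inj_eq (addIr _)).
Qed.

Lemma natZp0 R2 n : (R2.+2 %| n)%N -> (n%:R : 'I_R2.+2) = 0.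
Proof. by move=> h; apply: val_inj; rewrite Zp_nat /=; apply/eqP. Qed.

Lemma shift_exists R2 k (a b : 'I_R2.+2) :
  (a %% gcdn k R2.+2 = b %% gcdn k R2.+2)%N -> exists t : 'I_R2.+2, b = a + t *+ k.
Proof.
set R := R2.+2; set g := gcdn k R => hab.
have [a0 _ ha0] := @Bezoutl R k isT.
set c := val (b - a).
have hc : b = a + c%:R by rewrite natr_Zp addrC subrK.
have gR : (g %| R)%N by apply: dvdn_gcdr.
have gc : (g %| c)%N.
  have e : val b = ((a + c) %% R)%N by rewrite {1}hc /= natr_Zp.
  have : (a + c == a + 0 %[mod g])%N.
    by rewrite addn0 -(modn_dvdm _ gR) -e hab.
  by rewrite eqn_modDl mod0n.
have hg : (g%:R : 'I_R) = - (a0%:R * k%:R).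
  apply/eqP; rewrite -addr_eq0 -natrM -natrD; apply/eqP; apply: natZp0.
  by rewrite /g gcdnC.
exists (- ((c %/ g)%:R * a0%:R)).
rewrite {1}hc; congr (_ + _).
rewrite -mulr_natr -{1}(divnK gc) natrM hg; ring.
Qed.

Lemma Nc_const R2 k (a b : 'I_R2.+2) :
  (a %% gcdn k R2.+2 = b %% gcdn k R2.+2)%N -> Nc k a = Nc k b.
Proof. by move=> /shift_exists [t ->]; apply: Nc_shift. Qed.

Section Link.

Definition phi n1 g1 R2 (x : 'I_R2.+2) : 'I_n1.+1 * 'I_g1.+1 :=
  (inord (x %/ g1.+1), inZp x).
Definition psi n1 g1 R2 (y : 'I_n1.+1 * 'I_g1.+1) : 'I_R2.+2 :=
  inord (y.1 * g1.+1 + y.2).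

Lemma phiK n1 g1 R2 : R2.+2 = (n1.+1 * g1.+1)%N ->
  cancel (@phi n1 g1 R2) (@psi n1 g1 R2).
Proof.
move=> hR x; rewrite /psi /phi /= (@inordK n1 (x %/ g1.+1)); last first.
  by rewrite ltn_divLR // -hR.
by rewrite -divn_eq inord_val.
Qed.

Lemma psiK n1 g1 R2 : R2.+2 = (n1.+1 * g1.+1)%N ->
  cancel (@psi n1 g1 R2) (@phi n1 g1 R2).
Proof.
move=> hR [j i]; rewrite /psi /phi /=.
have lt : (j * g1.+1 + i < R2.+2)%N.
  rewrite hR; have := ltn_ord j; have := ltn_ord i; nia.
have v : (inord (j * g1.+1 + i) : 'I_R2.+2) = (j * g1.+1 + i)%N :> nat by rewrite inordK.
have e : ((j * g1.+1 + i) %/ g1.+1)%N = j by rewrite divnMDl // divn_small // addn0.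
congr (_, _); apply: val_inj; rewrite /= v.
  by rewrite e inordK.
by rewrite modnMDl modn_small.
Qed.

End Link.

Definition Bc R2 k g r :=
  #|[set S : {set 'I_R2.+2} | (#|S| == k) && ((val (\sum_(i in S) i)%R) %% g == r)%N]|.

Definition Gc n g1 k (r : 'I_g1.+1) :=
  #|[set T : {set 'I_n * 'I_g1.+1} | (#|T| == k) && (\sum_(y in T) y.2 == r)]|.

Lemma class_card n1 g1 R2 r : R2.+2 = (n1.+1 * g1.+1)%N -> (r < g1.+1)%N ->
  #|[set s : 'I_R2.+2 | (s %% g1.+1 == r)%N]| = n1.+1.
Proof.
move=> hR hr.
have := @card_bij _ _ _ _ (phiK hR) (psiK hR) (fun y => val y.2 == r).
move=> /= H.
have -> : #|[set s : 'I_R2.+2 | (s %% g1.+1 == r)%N]| =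
          #|[set y : 'I_n1.+1 * 'I_g1.+1 | val y.2 == r]|.
  rewrite -H; apply: eq_card => x; rewrite !inE /phi //.
have -> : [set y : 'I_n1.+1 * 'I_g1.+1 | val y.2 == r] =
          setX [set: 'I_n1.+1] [set (inord r : 'I_g1.+1)].
  apply/setP => -[j i]; rewrite !inE /=.
  apply/eqP/eqP => [<-|->]; first by apply: val_inj; rewrite /= inordK.
  by rewrite inordK.
by rewrite cardsX cardsT card_ord cards1 muln1.
Qed.

Lemma B_N n1 g1 R2 k r (s : 'I_R2.+2) : R2.+2 = (n1.+1 * g1.+1)%N ->
  g1.+1 = gcdn k R2.+2 -> (s %% g1.+1 = r)%N ->
  Bc R2 k g1.+1 r = (n1.+1 * Nc k s)%N.
Proof.
move=> hR hg hs.
have gR : (g1.+1 %| R2.+2)%N by rewrite hR dvdn_mull.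
rewrite /Bc -sum1_card.
rewrite (partition_big (fun S : {set 'I_R2.+2} => \sum_(i in S) i)
   (fun s' : 'I_R2.+2 => (s' %% g1.+1 == r)%N)); last first.
  by move=> S; rewrite inE => /andP[_].
have hr : (r < g1.+1)%N by rewrite -hs ltn_mod.
rewrite (eq_bigr (fun _ => Nc k s)); last first.
  move=> s' hs'; have -> : Nc k s = Nc k s'.
    by apply: Nc_const; rewrite -hg hs (eqP hs').
  rewrite sum1dep_card /Nc.
  apply: eq_card => S; rewrite !inE; case: (#|S| == k) => //=.
  by case: (\sum_(i in S) i =P s') => [->|]; [rewrite hs' | rewrite andbF].
rewrite (eq_bigl (fun x => x \in [set x : 'I_R2.+2 | (x %% g1.+1)%N == r])); last first.
  by move=> x; rewrite in_set.
by rewrite sum_nat_const (class_card hR hr).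
Qed.

Lemma B_G n1 g1 R2 k r : R2.+2 = (n1.+1 * g1.+1)%N -> (r < g1.+1)%N ->
  Bc R2 k g1.+1 r = Gc n1.+1 k (inZp r : 'I_g1.+1).
Proof.
move=> hR hr; rewrite /Bc /Gc.
apply: (etrans _ (@card_bij_sets _ _ _ _ (phiK hR) (psiK hR)
   (fun T => (#|T| == k) && (\sum_(y in T) y.2 == inZp r)))).
apply: eq_card => S; rewrite !inE card_imset; last exact: (can_inj (phiK hR)).
case: (#|S| == k) => //=.
rewrite big_imset /=; last by move=> x y _ _; apply: (can_inj (phiK hR)).
have gR : (g1.+1 %| R2.+2)%N by rewrite hR dvdn_mull.
rewrite -(inj_eq val_inj) /= !val_sumZp /phi /= modn_summ (modn_small hr).
by rewrite (modn_dvdm _ gR).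
Qed.


Definition colc n g1 (j : 'I_n) (S : {set 'I_n * 'I_g1.+1}) :=
  #|[set x in S | x.1 == j]|.
Definition rot n g1 (j : 'I_n) (u : 'I_g1.+1) (x : 'I_n * 'I_g1.+1) :=
  if x.1 == j then (x.1, x.2 + u) else x.

Lemma rotK n g1 (j : 'I_n) (u : 'I_g1.+1) : cancel (rot j u) (rot j (-u)).
Proof.
move=> [a b]; rewrite /rot /=.
case: (a =P j) => [->|/eqP/negbTE na]; by rewrite /= ?eqxx ?addrK ?na.
Qed.

Lemma rot_inj n g1 (j : 'I_n) (u : 'I_g1.+1) : injective (rot j u).
Proof. exact: can_inj (rotK j u). Qed.

Lemma rot1 n g1 (j : 'I_n) (u : 'I_g1.+1) x : (rot j u x).1 = x.1.
Proof. by rewrite /rot; case: ifP. Qed.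

Lemma col_rot n g1 (i j : 'I_n) (u : 'I_g1.+1) (S : {set 'I_n * 'I_g1.+1}) :
  colc i (rot j u @: S) = colc i S.
Proof.
rewrite /colc.
have -> : [set x in rot j u @: S | x.1 == i] = rot j u @: [set x in S | x.1 == i].
  apply/setP => y; rewrite !inE; apply/andP/imsetP.
    case=> /imsetP [x xS ->] hx; exists x => //.
    by rewrite inE xS -(rot1 j u x) hx.
  case=> x; rewrite inE => /andP [xS xi] ->; split; first exact: imset_f.
  by rewrite rot1.
by rewrite card_imset //; apply: rot_inj.
Qed.

Lemma sum_rot n g1 (j : 'I_n) (u : 'I_g1.+1) (S : {set 'I_n * 'I_g1.+1}) :
  \sum_(y in rot j u @: S) y.2 = \sum_(x in S) x.2 + u *+ colc j S.
Proof.
rewrite big_imset /=; last by move=> x y _ _; apply: rot_inj.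
rewrite (bigID (fun x => x.1 == j)) /= [in RHS](bigID (fun x => x.1 == j)) /=.
rewrite (eq_bigr (fun x => x.2 + u)); last by move=> x /andP[_ h]; rewrite /rot h.
rewrite [X in _ + X = _](eq_bigr (fun x => x.2)); last first.
  by move=> x /andP[_ /negbTE h]; rewrite /rot h.
have e1 : \sum_(x in S | x.1 == j) (x.2 + u) =
          \sum_(x in S | x.1 == j) x.2 + u *+ colc j S.
  rewrite big_split /=; congr (_ + _); rewrite /colc -sumr_const.
  by apply: eq_bigl => x; rewrite !inE.
by rewrite e1 addrAC.
Qed.

Definition nf n g1 (S : {set 'I_n * 'I_g1.+1}) :=
  [exists j, (0 < colc j S < g1.+1)%N].

Definition Phi n g1 (uf : nat -> 'I_g1.+1) (S : {set 'I_n * 'I_g1.+1}) :=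
  if [pick j | (0 < colc j S < g1.+1)%N] is Some j
  then rot j (uf (colc j S)) @: S else S.

Lemma colPhi n g1 uf (i : 'I_n) (S : {set 'I_n * 'I_g1.+1}) :
  colc i (Phi uf S) = colc i S.
Proof. by rewrite /Phi; case: pickP => // j _; rewrite col_rot. Qed.

Lemma pickPhi n g1 uf (S : {set 'I_n * 'I_g1.+1}) :
  [pick j | (0 < colc j (Phi uf S) < g1.+1)%N] = [pick j | (0 < colc j S < g1.+1)%N].
Proof. by apply: eq_pick => j; rewrite colPhi. Qed.

Lemma Phi_props n g1 uf (d : 'I_g1.+1) (S : {set 'I_n * 'I_g1.+1}) :
  (forall c, (0 < c < g1.+1)%N -> uf c *+ c = d) -> nf S ->
  [/\ #|Phi uf S| = #|S|, nf (Phi uf S) &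
      \sum_(y in Phi uf S) y.2 = \sum_(y in S) y.2 + d].
Proof.
move=> hu hnf; split.
- rewrite /Phi; case: pickP => // j _; rewrite card_imset //; exact: rot_inj.
- by apply/existsP; case/existsP: hnf => j hj; exists j; rewrite colPhi.
rewrite /Phi; case: pickP => [j hj | none].
  by rewrite sum_rot hu.
by case/existsP: hnf => j; rewrite none.
Qed.

Definition Gnf n g1 k (r : 'I_g1.+1) :=
  #|[set S : {set 'I_n * 'I_g1.+1} | [&& #|S| == k, nf S & \sum_(y in S) y.2 == r]]|.

Lemma Gnf_le n g1 k uf (d : 'I_g1.+1) :
  (forall c, (0 < c < g1.+1)%N -> uf c *+ c = d) ->
  forall r, (Gnf n k r <= Gnf n k (r + d)%R)%N.
Proof.
move=> hu r; rewrite /Gnf.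
set D := [set S | _].
rewrite -(@card_in_imset _ _ (Phi uf) D); last first.
  move=> S1 S2; rewrite !inE => /and3P[_ n1 _] /and3P[_ n2 _] e.
  have hp : [pick j | (0 < colc j S1 < g1.+1)%N] = [pick j | (0 < colc j S2 < g1.+1)%N].
    by rewrite -(pickPhi uf S1) e pickPhi.
  have hc : forall j, colc j S1 = colc j S2.
    by move=> j; rewrite -(colPhi uf j S1) e colPhi.
  move: e; rewrite /Phi hp.
  case: pickP => [j _ | none]; last by case/existsP: n2 => j; rewrite none.
  by rewrite hc => /imset_inj; apply; apply: rot_inj.
apply: subset_leq_card; apply/subsetP => T /imsetP [S]; rewrite inE.
case/and3P => hk hnf hs ->.
have [h1 h2 h3] := Phi_props hu hnf.
by rewrite inE h1 hk h2 h3 (eqP hs) eqxx.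
Qed.

Definition Gf n g1 k (r : 'I_g1.+1) :=
  #|[set S : {set 'I_n * 'I_g1.+1} | [&& #|S| == k, ~~ nf S & \sum_(y in S) y.2 == r]]|.

Lemma G_split n g1 k (r : 'I_g1.+1) : Gc n k r = (Gnf n k r + Gf n k r)%N.
Proof.
rewrite /Gc /Gnf /Gf -(cardsID [set S | nf S]); congr (_ + _)%N;
  apply: eq_card => S; rewrite !inE;
  by case: (nf S); case: (#|S| == k); case: (\sum_(y in S) y.2 == r).
Qed.

Lemma col_le n g1 (j : 'I_n) (S : {set 'I_n * 'I_g1.+1}) : (colc j S <= g1.+1)%N.
Proof.
have -> : g1.+1 = #|setX [set j] [set: 'I_g1.+1]|.
  by rewrite cardsX cards1 cardsT card_ord mul1n.
apply: subset_leq_card; apply/subsetP => -[a b]; rewrite !inE /= => /andP[_ ->].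
by [].
Qed.

Lemma colX n g1 (T : {set 'I_n}) (j : 'I_n) :
  colc j (setX T [set: 'I_g1.+1]) = if j \in T then g1.+1 else 0%N.
Proof.
rewrite /colc; case: ifP => hj.
  have -> : [set x in setX T [set: 'I_g1.+1] | x.1 == j] = setX [set j] [set: 'I_g1.+1].
    apply/setP => -[a b]; rewrite !inE /= andbT.
    by case: (a =P j) => [->|]; rewrite ?hj ?andbF.
  by rewrite cardsX cards1 cardsT card_ord mul1n.
apply/eqP; rewrite cards_eq0; apply/eqP/setP => -[a b]; rewrite !inE /= andbT.
by case: (a =P j) => [->|]; rewrite ?hj ?andbF.
Qed.

Lemma sumX n g1 (T : {set 'I_n}) :
  \sum_(y in setX T [set: 'I_g1.+1]) y.2 = (\sum_(i : 'I_g1.+1) i) *+ #|T|.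
Proof.
rewrite -sumr_const pair_big_dep /=.
by apply: eq_bigl => -[j i]; rewrite !inE andbT.
Qed.

Lemma full_eq n g1 (S : {set 'I_n * 'I_g1.+1}) :
  ~~ nf S -> S = setX [set j | colc j S != 0%N] [set: 'I_g1.+1].
Proof.
move=> /existsPn hnf; apply/setP => -[j i]; rewrite !inE andbT /=.
apply/idP/idP => [xS|].
  rewrite -lt0n /colc card_gt0; apply/set0Pn; exists (j, i).
  by rewrite !inE xS /=.
move=> hc; have := hnf j; rewrite lt0n hc /= -leqNgt => hge.
have e : [set x in S | x.1 == j] = setX [set j] [set: 'I_g1.+1].
  apply/eqP; rewrite eqEcard; apply/andP; split.
    by apply/subsetP => -[a b]; rewrite !inE /= => /andP[_ ->].
  by rewrite cardsX cards1 cardsT card_ord mul1n.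
have : (j, i) \in setX [set j] [set: 'I_g1.+1] by rewrite !inE eqxx.
by rewrite -e inE => /andP[].
Qed.

Lemma setX_inj n g1 : injective (fun T : {set 'I_n} => setX T [set: 'I_g1.+1]).
Proof.
move=> T1 T2 e; apply/setP => j.
have : (j, (0 : 'I_g1.+1)) \in setX T1 [set: 'I_g1.+1] = ((j, 0) \in setX T2 [set: 'I_g1.+1]).
  by rewrite e.
by rewrite !inE !andbT.
Qed.

Lemma Gf_val n g1 k m (r : 'I_g1.+1) : k = (m * g1.+1)%N ->
  Gf n k r = (((\sum_(i : 'I_g1.+1) i) *+ m == r) * 'C(n, m))%N.
Proof.
move=> hk; rewrite /Gf.
set s := \sum_(i : 'I_g1.+1) i.
have -> : [set S : {set 'I_n * 'I_g1.+1} | [&& #|S| == k, ~~ nf S & \sum_(y in S) y.2 == r]]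
   = (fun T => setX T [set: 'I_g1.+1]) @: [set T : {set 'I_n} | (#|T| == m) && (s *+ m == r)].
  apply/setP => S; rewrite inE; apply/idP/imsetP.
    case/and3P => hk' hnf hs.
    have eS := full_eq hnf.
    have hT : #|[set j | colc j S != 0%N]| = m.
      move: hk'; rewrite {1}eS cardsX cardsT card_ord hk eqn_pmul2r //.
      by move/eqP.
    exists [set j | colc j S != 0%N] => //.
    rewrite inE hT eqxx /= -hT -(eqP hs) {2}eS sumX //.
  case=> T; rewrite inE => /andP[/eqP hT hr] ->.
  rewrite cardsX cardsT card_ord hT hk eqxx sumX hT hr andbT /=.
  apply/existsPn => j; rewrite colX; case: (j \in T) => //.
  by rewrite ltnn andbF.
rewrite card_imset; last exact: setX_inj.
case: (s *+ m == r) => /=.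
  rewrite mul1n; have := card_draws 'I_n m; rewrite card_ord => <-.
  apply: eq_card => T.
  by rewrite !inE andbT.
by rewrite mul0n; apply: eq_card0 => T; rewrite !inE andbF.
Qed.

Lemma G_total n g1 k : (\sum_(r : 'I_g1.+1) Gc n k r)%N = 'C(n * g1.+1, k).
Proof.
have -> : (n * g1.+1)%N = #|{: 'I_n * 'I_g1.+1}| by rewrite card_prod !card_ord.
rewrite -card_draws -sum1dep_card.
rewrite (partition_big (fun S : {set 'I_n * 'I_g1.+1} => \sum_(y in S) y.2) xpredT) //.
apply: eq_bigr => r _; rewrite sum1dep_card /Gc.
by apply: eq_card => S; rewrite !inE.
Qed.


Lemma Gnf_iter n g1 k uf (d : 'I_g1.+1) :
  (forall c, (0 < c < g1.+1)%N -> uf c *+ c = d) ->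
  forall r i, (Gnf n k r <= Gnf n k (r + d *+ i)%R)%N.
Proof.
move=> hu r; elim=> [|i IH]; first by rewrite mulr0n addr0.
apply: (leq_trans IH); rewrite mulrS addrCA addrC.
by have := Gnf_le n k hu (r + d *+ i); rewrite addrC.
Qed.

Lemma Gnf_const n g2 k uf :
  (forall c, (0 < c < g2.+2)%N -> uf c *+ c = (1 : 'I_g2.+2)) ->
  forall r : 'I_g2.+2, Gnf n k r = Gnf n k (0 : 'I_g2.+2).
Proof.
move=> hu r; apply/eqP; rewrite eqn_leq; apply/andP; split.
  have := Gnf_iter n k hu r (val (- r)); rewrite -[1 *+ _]/((val (-r))%:R) natr_Zp.
  by rewrite subrr.
have := Gnf_iter n k hu 0 (val r); rewrite -[1 *+ _]/((val r)%:R) natr_Zp.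
by rewrite add0r.
Qed.

Lemma sum_pick1 g1 (s : 'I_g1.+1) (C : nat) :
  (\sum_(r : 'I_g1.+1) ((s == r) * C))%N = C.
Proof.
rewrite (bigD1 s) //= eqxx mul1n big1 ?addn0 // => r /negbTE.
by rewrite eq_sym => ->.
Qed.

Lemma grid_prime n g2 k m uf (r : 'I_g2.+2) :
  (forall c, (0 < c < g2.+2)%N -> uf c *+ c = (1 : 'I_g2.+2)) ->
  k = (m * g2.+2)%N ->
  (g2.+2 * Gc n k r + 'C(n, m) =
   'C(n * g2.+2, k) + g2.+2 * (((\sum_(i : 'I_g2.+2) i) *+ m == r) * 'C(n, m)))%N.
Proof.
move=> hu hk.
have hG : forall r', Gc n k r' =
   (Gnf n k (0%R : 'I_g2.+2) + ((\sum_(i : 'I_g2.+2) i) *+ m == r') * 'C(n, m))%N.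
  by move=> r'; rewrite G_split (Gnf_const _ _ hu) (Gf_val _ _ hk).
rewrite -G_total (eq_bigr _ (fun r' _ => hG r')) big_split /= sum_pick1.
rewrite big_const_ord iter_addn_0 hG.
set t := (_ * 'C(n, m))%N; set X := Gnf n k (0%R : 'I_g2.+2); lia.
Qed.

Lemma Pplus_Nc R2 k lam : Pplus R2.+2 k lam = Nc k (inZp lam : 'I_R2.+2).
Proof.
rewrite /Pplus /Nc; apply: eq_card => S; rewrite !inE; congr (_ && _).
by rewrite -(inj_eq val_inj) val_sumZp.
Qed.

Lemma prime_formula R2 n1 g2 k m lam uf :
  R2.+2 = (n1.+1 * g2.+2)%N -> g2.+2 = gcdn k R2.+2 -> k = (m * g2.+2)%N ->
  (forall c, (0 < c < g2.+2)%N -> uf c *+ c = (1 : 'I_g2.+2)) ->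
  (R2.+2 * Pplus R2.+2 k lam + 'C(n1.+1, m) = 'C(R2.+2, k) +
    g2.+2 * ((val ((\sum_(i : 'I_g2.+2) i) *+ m) == lam %% g2.+2) * 'C(n1.+1, m)))%N.
Proof.
move=> hR hg hk hu; rewrite Pplus_Nc.
have gR : (g2.+2 %| R2.+2)%N by rewrite hR dvdn_mull.
have hs : ((inZp lam : 'I_R2.+2) %% g2.+2)%N = (lam %% g2.+2)%N.
  by rewrite /= (modn_dvdm _ gR).
have e1 := B_N hR hg hs.
have e2 := B_G k hR (ltn_mod lam g2.+2).
have e3 := @grid_prime n1.+1 g2 k m uf (inZp (lam %% g2.+2)) hu hk.
have -> : (val ((\sum_(i : 'I_g2.+2) i) *+ m) == (lam %% g2.+2)%N) =
          ((\sum_(i : 'I_g2.+2) i) *+ m == inZp (lam %% g2.+2)).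
  by rewrite -(inj_eq val_inj) /= modn_mod.
have eC : 'C(R2.+2, k) = 'C(n1.+1 * g2.+2, k) by rewrite hR.
rewrite eC -e3 -e2 e1; set N := Nc k _; rewrite hR; ring.
Qed.


Lemma sig4 : (\sum_(i : 'I_4) i) = inZp 2 :> 'I_4.
Proof. by rewrite !big_ord_recl big_ord0; apply/val_inj. Qed.
Lemma sig2 : (\sum_(i : 'I_2) i) = 1.
Proof. by rewrite !big_ord_recl big_ord0; apply/val_inj. Qed.
Lemma sig3 : (\sum_(i : 'I_3) i) = 0.
Proof. by rewrite !big_ord_recl big_ord0; apply/val_inj. Qed.
Lemma sig5 : (\sum_(i : 'I_5) i) = 0.
Proof. by rewrite !big_ord_recl big_ord0; apply/val_inj. Qed.
Lemma sig7 : (\sum_(i : 'I_7) i) = 0.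
Proof. by rewrite !big_ord_recl big_ord0; apply/val_inj. Qed.
Lemma uf2 : forall c, (0 < c < 2)%N -> (1 : 'I_2) *+ c = 1.
Proof. by move=> [|[|]]. Qed.
Lemma uf3 : forall c, (0 < c < 3)%N -> (c%:R : 'I_3) *+ c = 1.
Proof. by move=> [|[|[|]]] // _; apply/val_inj. Qed.
Lemma uf5 : forall c, (0 < c < 5)%N -> ((c ^ 3)%:R : 'I_5) *+ c = 1.
Proof. by move=> [|[|[|[|[|]]]]] // _; apply/val_inj. Qed.
Lemma uf7 : forall c, (0 < c < 7)%N -> ((c ^ 5)%:R : 'I_7) *+ c = 1.
Proof. by move=> [|[|[|[|[|[|[|[|]]]]]]]] // _; apply/val_inj. Qed.
Definition u4 (c : nat) : 'I_4 := if odd c then 2 else 1.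
Lemma uf4 : forall c, (0 < c < 4)%N -> u4 c *+ c = 2.
Proof. by move=> [|[|[|[|[|]]]]] // _; apply/val_inj. Qed.

Lemma Bc_2_4 R2 k r : (r < 2)%N -> Bc R2 k 2 r = (Bc R2 k 4 r + Bc R2 k 4 (r + 2))%N.
Proof.
move=> hr; rewrite /Bc.
have e0 : forall v : nat, ((v %% 2 == r) = (v %% 4 == r) || (v %% 4 == r + 2))%N
            /\ ~~ ((v %% 4 == r) && (v %% 4 == r + 2))%N.
  move=> v; rewrite -(modn_dvdm v (isT : (2 %| 4)%N)).
  have : (v %% 4 < 4)%N by rewrite ltn_mod.
  move: (v %% 4)%N => y; case: r hr => [|[|]] // _; case: y => [|[|[|[|]]]] //.
pose A := [set S : {set 'I_R2.+2} | (#|S| == k) && ((val (\sum_(i in S) i)%R) %% 4 == r)%N].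
pose B := [set S : {set 'I_R2.+2} | (#|S| == k) && ((val (\sum_(i in S) i)%R) %% 4 == r + 2)%N].
have -> : [set S : {set 'I_R2.+2} | (#|S| == k) && ((val (\sum_(i in S) i)%R) %% 2 == r)%N]
   = A :|: B.
  apply/setP => S; rewrite !inE; case: (#|S| == k) => //=.
  by have [-> _] := e0 (val (\sum_(i in S) i)%R).
rewrite cardsU (_ : A :&: B = set0) ?cards0 ?subn0 //.
apply/setP => S; rewrite !inE; case: (#|S| == k) => //=.
by have [_ /negbTE ->] := e0 (val (\sum_(i in S) i)%R).
Qed.

Lemma case9 R2 n1 lam : R2.+2 = (n1.+1 * 4)%N ->
  let N := Pplus R2.+2 4 lam in
  [/\ (lam %% 4 = 0)%N -> (4 * (n1.+1 * N) + 2 * n1.+1 = 'C(R2.+2, 4) + 'C(2 * n1.+1, 2))%N,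
      (lam %% 2 = 1)%N -> (4 * (n1.+1 * N) + 'C(2 * n1.+1, 2) = 'C(R2.+2, 4))%N &
      (lam %% 4 = 2)%N -> (4 * (n1.+1 * N) = 'C(R2.+2, 4) + 'C(2 * n1.+1, 2) + 2 * n1.+1)%N].
Proof.
move=> hR N.
have dR : (4 %| R2.+2)%N by rewrite hR dvdn_mull.
have g4 : 4%N = gcdn 4 R2.+2 by apply/esym/gcdn_idPl.
have hR2 : R2.+2 = ((2 * n1 + 1).+1 * 2)%N by rewrite hR; lia.
have bN : forall r, (lam %% 4 = r)%N -> Bc R2 4%N 4%N r = (n1.+1 * N)%N.
  move=> r hr; rewrite /N Pplus_Nc; apply: (B_N hR g4).
  by rewrite /= (modn_dvdm _ dR).
have b4 : forall r, (r < 4)%N -> Bc R2 4%N 4%N r = Gc n1.+1 4%N (inZp r : 'I_4).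
  by move=> r hr; apply: B_G.
have b2 : forall r, (r < 2)%N -> Bc R2 4%N 2%N r = Gc (2 * n1 + 1).+1 4%N (inZp r : 'I_2).
  by move=> r hr; apply: B_G.
have p2 := fun r => @grid_prime (2 * n1 + 1).+1 0 4%N 2%N (fun _ => 1) r uf2 erefl.
have nf4 : forall r : 'I_4, Gnf n1.+1 4%N r = Gnf n1.+1 4%N (r + 2).
  move=> r; apply/eqP; rewrite eqn_leq (@Gnf_le n1.+1 3 4%N u4 2 uf4) /=.
  have := @Gnf_iter n1.+1 3 4%N u4 2 uf4 (r + 2) 1%N.
  by rewrite -addrA (_ : (2 + 2 *+ 1 : 'I_4) = 0) ?addr0 //; apply/val_inj.
have gf4 : forall r : 'I_4, Gf n1.+1 4%N r = (((\sum_(i : 'I_4) i) *+ 1 == r) * 'C(n1.+1, 1))%N.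
  by move=> r; apply: Gf_val.
have e2 : ((2 * n1 + 1).+1 = 2 * n1.+1)%N by lia.
have c0 := p2 (inZp 0); have c1 := p2 (inZp 1).
have hR3 : R2.+2 = (2 * n1.+1 * 2)%N by rewrite hR2 e2.
rewrite sig2 e2 -hR3 /= in c0 c1.
have d0 := Bc_2_4 R2 4 (isT : (0 < 2)%N).
have d1 := Bc_2_4 R2 4 (isT : (1 < 2)%N).
rewrite !b2 // e2 !b4 // !(G_split n1.+1) !gf4 sig4 bin1 /= in d0 d1.
have x02 : Gnf n1.+1 4%N (inZp 2 : 'I_4) = Gnf n1.+1 4%N (inZp 0 : 'I_4).
  by rewrite nf4; congr Gnf; apply/val_inj.
have x13 : Gnf n1.+1 4%N (inZp 3 : 'I_4) = Gnf n1.+1 4%N (inZp 1 : 'I_4).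
  by rewrite nf4; congr Gnf; apply/val_inj.
rewrite x02 x13 in d0 d1.
set X := (n1.+1 * N)%N.
split => hl.
- have := bN 0%N hl; rewrite b4 // G_split gf4 sig4 /= => h; lia.
- have h3 : (lam %% 4 = 1 \/ lam %% 4 = 3)%N.
    move: hl; rewrite -(modn_dvdm lam (isT : (2 %| 4)%N)).
    have : (lam %% 4 < 4)%N by rewrite ltn_mod.
    by move: (lam %% 4)%N => y; case: y => [|[|[|[|]]]] //; auto.
  case: h3 => h3.
    have := bN 1%N h3; rewrite b4 // G_split gf4 sig4 /= => h; lia.
  have := bN 3%N h3; rewrite b4 // G_split gf4 sig4 /= x13 => h; lia.
- have := bN 2%N hl; rewrite b4 // G_split gf4 sig4 /= x02 bin1 => h; lia.
Qed.


Lemma prime_rat R2 n1 g2 m lam uf :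
  R2.+2 = (n1.+1 * g2.+2)%N -> g2.+2 = gcdn (m * g2.+2) R2.+2 -> (0 < m)%N ->
  (forall c, (0 < c < g2.+2)%N -> uf c *+ c = (1 : 'I_g2.+2)) ->
  ((Pplus R2.+2 (m * g2.+2) lam)%:R : rat) =
    ('C(R2.+1, (m * g2.+2).-1))%:R / (m * g2.+2)%:R
    - ('C(n1, m.-1))%:R / (m * g2.+2)%:R
    + ((val ((\sum_(i : 'I_g2.+2) i) *+ m) == (lam %% g2.+2)%N) : nat)%:R
       * ('C(n1, m.-1))%:R / m%:R.
Proof.
move=> hR hg hm hu.
have E := prime_formula lam hR hg erefl hu.
set c := (val _ == _ : nat) in E *.
set N := Pplus _ _ _ in E *.
have b1 := mul_bin_diag R2.+2 (m * g2.+2).-1.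
have b2 := mul_bin_diag n1.+1 m.-1.
rewrite prednK ?muln_gt0 ?hm // in b1.
rewrite prednK // in b2.
move: E b1 b2 => /(congr1 (fun x => x%:R : rat)) E /(congr1 (fun x => x%:R : rat)) b1
  /(congr1 (fun x => x%:R : rat)) b2.
rewrite natrD natrM [X in _ = X]natrD natrM natrM in E.
rewrite !natrM in b1 b2.
rewrite /= in b1 b2.
have hRr : (R2.+2%:R : rat) = n1.+1%:R * g2.+2%:R by rewrite hR natrM.
have nz1 : (n1.+1%:R : rat) != 0 by rewrite pnatr_eq0.
have nz2 : (g2.+2%:R : rat) != 0 by rewrite pnatr_eq0.
have nz3 : (m%:R : rat) != 0 by rewrite pnatr_eq0 -lt0n.
rewrite !natrM.
move: E b1 b2 hRr nz1 nz2 nz3.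
move: (R2.+2%:R : rat) (n1.+1%:R : rat) (g2.+2%:R : rat) (m%:R : rat) (N%:R : rat) (c%:R : rat).
move: ('C(R2.+2, m * g2.+2)%:R : rat) ('C(n1.+1, m)%:R : rat).
move: ('C(R2.+1, (m * g2.+2).-1)%:R : rat) ('C(n1, m.-1)%:R : rat).
move=> CK FM Cr Fr Rr nr gr mr Nr cr E b1 b2 hRr nz1 nz2 nz3.
have hC : Cr = nr * gr * CK / (mr * gr).
  rewrite -hRr b1; field; by rewrite nz3 nz2.
have hF : Fr = nr * FM / mr by rewrite b2; field.
have hN : Nr = (Cr + gr * (cr * Fr) - Fr) / (nr * gr).
  by rewrite -E -hRr; field; rewrite hRr mulf_neq0.
rewrite hN hC hF; field.
by rewrite nz1 nz2 nz3.
Qed.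


Lemma case1 q lam : (q %% 3 = 1)%N -> (7 <= q)%N ->
  ((Pplus q.-1 (5 - 2) lam)%:R : rat) =
  (if (lam %% 3 == 0)%N then (('C(q - 2, 2%N))%:R - 1) / 3 + 1
   else (('C(q - 2, 2%N))%:R - 1) / 3).
Proof.
move=> h1 h2.
have hq : q.-1 = (q - 3).+2 by lia.
have hR : (q - 3).+2 = (((q - 1) %/ 3 - 1).+1 * 3)%N by lia.
have hq2 : (q - 2 = (q - 3).+1)%N by lia.
have hg : 3%N = gcdn (1 * 3) (q - 3).+2.
  by apply/esym/gcdn_idPl; rewrite hR dvdn_mull.
rewrite hq hq2 (@prime_rat (q - 3) _ 1 1 lam (fun c => c%:R) hR hg isT uf3).
rewrite sig3 mul0rn bin0 /= eq_sym.
by case: (lam %% 3 == 0)%N => /=; field.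
Qed.
Lemma v22 : val ((1 : 'I_2) *+ 2) = 0%N. Proof. by []. Qed.
Lemma v23 : val ((1 : 'I_2) *+ 3) = 1%N. Proof. by []. Qed.
Lemma v24 : val ((1 : 'I_2) *+ 4) = 0%N. Proof. by []. Qed.

Lemma case3 q lam : (q %% 5 = 1)%N -> (11 <= q)%N ->
  ((Pplus q.-1 (7 - 2) lam)%:R : rat) =
  (if (lam %% 5 == 0)%N then (('C(q - 2, 4%N))%:R - 1) / 5 + 1
   else (('C(q - 2, 4%N))%:R - 1) / 5).
Proof.
move=> h1 h2.
have hq : q.-1 = (q - 3).+2 by lia.
have hR : (q - 3).+2 = (((q - 1) %/ 5 - 1).+1 * 5)%N by lia.
have hq2 : (q - 2 = (q - 3).+1)%N by lia.
have hg : 5%N = gcdn (1 * 5) (q - 3).+2.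
  by apply/esym/gcdn_idPl; rewrite hR dvdn_mull.
rewrite hq hq2 (@prime_rat (q - 3) _ 3 1 lam (fun c => (c ^ 3)%:R) hR hg isT uf5).
rewrite sig5 mul0rn bin0 /= eq_sym.
by case: (lam %% 5 == 0)%N => /=; field.
Qed.

Lemma case6 q lam : (q %% 7 = 1)%N -> (29 <= q)%N ->
  ((Pplus q.-1 (9 - 2) lam)%:R : rat) =
  (if (lam %% 7 == 0)%N then (('C(q - 2, 6%N))%:R - 1) / 7 + 1
   else (('C(q - 2, 6%N))%:R - 1) / 7).
Proof.
move=> h1 h2.
have hq : q.-1 = (q - 3).+2 by lia.
have hR : (q - 3).+2 = (((q - 1) %/ 7 - 1).+1 * 7)%N by lia.
have hq2 : (q - 2 = (q - 3).+1)%N by lia.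
have hg : 7%N = gcdn (1 * 7) (q - 3).+2.
  by apply/esym/gcdn_idPl; rewrite hR dvdn_mull.
rewrite hq hq2 (@prime_rat (q - 3) _ 5 1 lam (fun c => (c ^ 5)%:R) hR hg isT uf7).
rewrite sig7 mul0rn bin0 /= eq_sym.
by case: (lam %% 7 == 0)%N => /=; field.
Qed.

Lemma case2 q lam : (q %% 4 = 3)%N -> (7 <= q)%N ->
  ((Pplus q.-1 (6 - 2) lam)%:R : rat) =
  (if (lam %% 2 == 0)%N then (('C(q - 2, 3%N))%:R + (q%:R - 3) / 2) / 4
   else (('C(q - 2, 3%N))%:R - (q%:R - 3) / 2) / 4).
Proof.
move=> h1 h2.
have hq : q.-1 = (q - 3).+2 by lia.
have hR : (q - 3).+2 = (((q - 1) %/ 2 - 1).+1 * 2)%N by lia.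
have hq2 : (q - 2 = (q - 3).+1)%N by lia.
have hg : 2%N = gcdn (2 * 2) (q - 3).+2.
  by rewrite -gcdn_modr (_ : ((q - 3).+2 %% (2 * 2) = 2)%N) //; lia.
have hqr : (q%:R : rat) = 2 * ((q - 1) %/ 2 - 1)%:R + 3.
  set n := ((q - 1) %/ 2 - 1)%N.
  have e : q = (2 * n + 3)%N by rewrite /n; lia.
  by rewrite {1}e natrD natrM.
rewrite hqr hq hq2 (@prime_rat (q - 3) _ 0 2 lam (fun _ => 1) hR hg isT uf2).
rewrite sig2 v22 bin1 /= eq_sym.
by case: (lam %% 2 == 0)%N => /=; field.
Qed.

Lemma case7 q lam : (q %% 4 = 3)%N -> (11 <= q)%N ->
  ((Pplus q.-1 (10 - 2) lam)%:R : rat) =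
  (if (lam %% 2 == 0)%N then (('C(q - 2, 7%N))%:R + ('C((q - 3) %/ 2, 3))%:R) / 8
   else (('C(q - 2, 7%N))%:R - ('C((q - 3) %/ 2, 3))%:R) / 8).
Proof.
move=> h1 h2.
have hq : q.-1 = (q - 3).+2 by lia.
have hR : (q - 3).+2 = (((q - 1) %/ 2 - 1).+1 * 2)%N by lia.
have hq2 : (q - 2 = (q - 3).+1)%N by lia.
have hn : ((q - 3) %/ 2 = (q - 1) %/ 2 - 1)%N by lia.
have hg : 2%N = gcdn (4 * 2) (q - 3).+2.
  rewrite -gcdn_modr.
  have [->|->] : ((q - 3).+2 %% (4 * 2) = 2 \/ (q - 3).+2 %% (4 * 2) = 6)%N by lia.
    by []. by [].
rewrite hn hq hq2 (@prime_rat (q - 3) _ 0 4 lam (fun _ => 1) hR hg isT uf2).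
rewrite sig2 v24 /= eq_sym.
by case: (lam %% 2 == 0)%N => /=; field.
Qed.

Lemma case4 q lam : ((q %% 6 = 3)%N \/ (q %% 6 = 5)%N) -> (9 <= q)%N ->
  ((Pplus q.-1 (8 - 2) lam)%:R : rat) =
  (if (lam %% 2 == 0)%N then (('C(q - 2, 5%N))%:R - ('C((q - 3) %/ 2, 2))%:R) / 6
   else (('C(q - 2, 5%N))%:R + ('C((q - 3) %/ 2, 2))%:R) / 6).
Proof.
move=> h1 h2.
have hq : q.-1 = (q - 3).+2 by lia.
have hR : (q - 3).+2 = (((q - 1) %/ 2 - 1).+1 * 2)%N by lia.
have hq2 : (q - 2 = (q - 3).+1)%N by lia.
have hn : ((q - 3) %/ 2 = (q - 1) %/ 2 - 1)%N by lia.
have hg : 2%N = gcdn (3 * 2) (q - 3).+2.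
  rewrite -gcdn_modr.
  have [->|->] : ((q - 3).+2 %% (3 * 2) = 2 \/ (q - 3).+2 %% (3 * 2) = 4)%N by lia.
    by []. by [].
rewrite hn hq hq2 (@prime_rat (q - 3) _ 0 3 lam (fun _ => 1) hR hg isT uf2).
rewrite sig2 v23 /=.
have [e|e] : (lam %% 2 = 0 \/ lam %% 2 = 1)%N by lia.
  by rewrite e /=; field.
by rewrite e /=; field.
Qed.

Lemma case5 q lam : (q %% 6 = 4)%N -> (10 <= q)%N ->
  ((Pplus q.-1 (8 - 2) lam)%:R : rat) =
  (if (lam %% 3 == 0)%N then (('C(q - 2, 5%N))%:R / 2 + (q%:R - 4) / 3) / 3
   else (('C(q - 2, 5%N))%:R - (q%:R - 4) / 3) / 6).
Proof.
move=> h1 h2.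
have hq : q.-1 = (q - 3).+2 by lia.
have hR : (q - 3).+2 = (((q - 1) %/ 3 - 1).+1 * 3)%N by lia.
have hq2 : (q - 2 = (q - 3).+1)%N by lia.
have hg : 3%N = gcdn (2 * 3) (q - 3).+2.
  by rewrite -gcdn_modr (_ : ((q - 3).+2 %% (2 * 3) = 3)%N) //; lia.
have hqr : (q%:R : rat) = 3 * ((q - 1) %/ 3 - 1)%:R + 4.
  set n := ((q - 1) %/ 3 - 1)%N.
  have e : q = (3 * n + 4)%N by rewrite /n; lia.
  by rewrite {1}e natrD natrM.
rewrite hqr hq hq2 (@prime_rat (q - 3) _ 1 2 lam (fun c => c%:R) hR hg isT uf3).
rewrite sig3 mul0rn bin1 /= eq_sym.
by case: (lam %% 3 == 0)%N => /=; field.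
Qed.

Lemma case8 q lam : ((q %% 9 = 4)%N \/ (q %% 9 = 7)%N) -> (13 <= q)%N ->
  ((Pplus q.-1 (11 - 2) lam)%:R : rat) =
  (if (lam %% 3 == 0)%N then (('C(q - 2, 8%N))%:R + 2 * ('C((q - 4) %/ 3, 2))%:R) / 9
   else (('C(q - 2, 8%N))%:R - ('C((q - 4) %/ 3, 2))%:R) / 9).
Proof.
move=> h1 h2.
have hq : q.-1 = (q - 3).+2 by lia.
have hR : (q - 3).+2 = (((q - 1) %/ 3 - 1).+1 * 3)%N by lia.
have hq2 : (q - 2 = (q - 3).+1)%N by lia.
have hn : ((q - 4) %/ 3 = (q - 1) %/ 3 - 1)%N by lia.
have hg : 3%N = gcdn (3 * 3) (q - 3).+2.
  rewrite -gcdn_modr.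
  have [->|->] : ((q - 3).+2 %% (3 * 3) = 3 \/ (q - 3).+2 %% (3 * 3) = 6)%N by lia.
    by []. by [].
rewrite hn hq hq2 (@prime_rat (q - 3) _ 1 3 lam (fun c => c%:R) hR hg isT uf3).
rewrite sig3 mul0rn /= eq_sym.
by case: (lam %% 3 == 0)%N => /=; field.
Qed.

Lemma case9r q lam : (q %% 4 = 1)%N -> (9 <= q)%N ->
  ((Pplus q.-1 (6 - 2) lam)%:R : rat) =
  (if (lam %% 4 == 0)%N then (('C(q - 2, 3%N))%:R + (q%:R - 7) / 2) / 4
   else if (lam %% 2 == 1)%N then (('C(q - 2, 3%N))%:R - (q%:R - 3) / 2) / 4
   else (('C(q - 2, 3%N))%:R + (q%:R + 1) / 2) / 4).
Proof.
move=> h1 h2.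
set n1 := ((q - 1) %/ 4 - 1)%N.
have hq : q.-1 = (q - 3).+2 by lia.
have hR : (q - 3).+2 = (n1.+1 * 4)%N by rewrite /n1; lia.
have hq2 : (q - 2 = (q - 3).+1)%N by lia.
have hqr : (q%:R : rat) = 4 * n1%:R + 5.
  have e : q = (4 * n1 + 5)%N by rewrite /n1; lia.
  by rewrite {1}e natrD natrM.
have [c0 c1 c2] := case9 lam hR.
rewrite hqr hq hq2.
set N := Pplus _ _ _ in c0 c1 c2 *.
have b1 := mul_bin_diag (q - 3).+2 3.
have b2 := mul_bin_diag (2 * n1.+1) 1.
have hF : 'C(2 * n1.+1, 2) = (n1.+1 * (2 * n1 + 1))%N.
  apply/eqP; rewrite -(eqn_pmul2l (_ : 0 < 2)%N) // -b2 bin1.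
  by rewrite (_ : (2 * n1.+1).-1 = 2 * n1 + 1)%N ?mulnA //; lia.
have hC : 'C((q - 3).+2, 4) = (n1.+1 * 'C((q - 3).+1, 3))%N.
  apply/eqP; rewrite -(eqn_pmul2l (_ : 0 < 4)%N) // -b1 /=.
  by rewrite hR mulnA (mulnC 4).
rewrite hF hC in c0 c1 c2.
set C3 := 'C((q - 3).+1, 3) in c0 c1 c2 *.
have nz : (n1.+1%:R : rat) != 0 by rewrite pnatr_eq0.
have : ((lam %% 4 = 0) \/ (lam %% 2 = 1) \/ (lam %% 4 = 2))%N by lia.
case=> [e0|[e1|e2]].
- have E := c0 e0; rewrite e0 /=.
  clear c0 c1 c2 hF hC b1 b2; move: N C3 E => N C3.
  rewrite -(addn1 n1).
  move/(congr1 (fun x => x%:R : rat)); rewrite !(natrD, natrM).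
  move: (N%:R : rat) (C3%:R : rat) nz; rewrite -(addn1 n1) natrD.
  move: (n1%:R : rat) => nr Nr Cr nz' E.
  have H0 : (nr + 1) * (4 * Nr - (Cr + 2 * nr - 1)) = 0.
    move/eqP: E; rewrite -subr_eq0 => /eqP E0.
    rewrite -E0; ring.
  move: H0 => /eqP; rewrite mulf_eq0 (negbTE nz') /= subr_eq0 => /eqP H.
  rewrite (_ : Nr = (4 * Nr) / 4); last by field.
  by rewrite H; field.
- have E := c1 e1; rewrite (_ : (lam %% 4 == 0)%N = false); last by apply/eqP; lia.
  rewrite e1 /=.
  clear c0 c1 c2 hF hC b1 b2; move: N C3 E => N C3.
  rewrite -(addn1 n1).
  move/(congr1 (fun x => x%:R : rat)); rewrite !(natrD, natrM).
  move: (N%:R : rat) (C3%:R : rat) nz; rewrite -(addn1 n1) natrD.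
  move: (n1%:R : rat) => nr Nr Cr nz' E.
  have H0 : (nr + 1) * (4 * Nr - (Cr - 2 * nr - 1)) = 0.
    move/eqP: E; rewrite -subr_eq0 => /eqP E0.
    rewrite -E0; ring.
  move: H0 => /eqP; rewrite mulf_eq0 (negbTE nz') /= subr_eq0 => /eqP H.
  rewrite (_ : Nr = (4 * Nr) / 4); last by field.
  by rewrite H; field.
- have E := c2 e2; rewrite (_ : (lam %% 4 == 0)%N = false); last by apply/eqP; lia.
  rewrite (_ : (lam %% 2 == 1)%N = false); last by apply/eqP; lia.
  rewrite /=.
  clear c0 c1 c2 hF hC b1 b2; move: N C3 E => N C3.
  rewrite -(addn1 n1).
  move/(congr1 (fun x => x%:R : rat)); rewrite !(natrD, natrM).
  move: (N%:R : rat) (C3%:R : rat) nz; rewrite -(addn1 n1) natrD.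
  move: (n1%:R : rat) => nr Nr Cr nz' E.
  have H0 : (nr + 1) * (4 * Nr - (Cr + 2 * nr + 3)) = 0.
    move/eqP: E; rewrite -subr_eq0 => /eqP E0.
    rewrite -E0; ring.
  move: H0 => /eqP; rewrite mulf_eq0 (negbTE nz') /= subr_eq0 => /eqP H.
  rewrite (_ : Nr = (4 * Nr) / 4); last by field.
  by rewrite H; field.
Qed.

Unset Implicit Arguments.

Theorem theorem5p2 (F : finFieldType) (d : nat)
  (j1 j2 : option F) (g1 g2 beta : F) (lam : nat) :
  let q := #|F| in
  (5 <= d)%N ->
  j1 != j2 -> g1 != 0 -> g2 != 0 ->
  coset_weight d (v2 j1 j2 g1 g2) 2 ->
  (q.-1).-primitive_root beta ->
  beta ^+ lam = - g2 / g1 ->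
  let P : rat := (Pplus q.-1 (d - 2) lam)%:R in
  let C k : rat := ('C(q - 2, k))%:R in
  let qQ : rat := q%:R in
  (* (1) *)
  ((q %% 3 = 1)%N -> (7 <= q)%N -> d = 5%N ->
     P = (if (lam %% 3 == 0)%N then (C 2%N - 1) / 3 + 1 else (C 2%N - 1) / 3)) /\
  (* (2) *)
  ((q %% 4 = 3)%N -> (7 <= q)%N -> d = 6%N ->
     P = (if (lam %% 2 == 0)%N then (C 3%N + (qQ - 3) / 2) / 4
          else (C 3%N - (qQ - 3) / 2) / 4)) /\
  (* (3) *)
  ((q %% 5 = 1)%N -> (11 <= q)%N -> d = 7%N ->
     P = (if (lam %% 5 == 0)%N then (C 4%N - 1) / 5 + 1 else (C 4%N - 1) / 5)) /\
  (* (4) *)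
  (((q %% 6 = 3)%N \/ (q %% 6 = 5)%N) -> (9 <= q)%N -> d = 8%N ->
     P = (if (lam %% 2 == 0)%N then (C 5%N - ('C((q - 3) %/ 2, 2))%:R) / 6
          else (C 5%N + ('C((q - 3) %/ 2, 2))%:R) / 6)) /\
  (* (5) *)
  ((q %% 6 = 4)%N -> (10 <= q)%N -> d = 8%N ->
     P = (if (lam %% 3 == 0)%N then (C 5%N / 2 + (qQ - 4) / 3) / 3
          else (C 5%N - (qQ - 4) / 3) / 6)) /\
  (* (6) *)
  ((q %% 7 = 1)%N -> (29 <= q)%N -> d = 9%N ->
     P = (if (lam %% 7 == 0)%N then (C 6%N - 1) / 7 + 1 else (C 6%N - 1) / 7)) /\
  (* (7) *)
  ((q %% 4 = 3)%N -> (11 <= q)%N -> d = 10%N ->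
     P = (if (lam %% 2 == 0)%N then (C 7%N + ('C((q - 3) %/ 2, 3))%:R) / 8
          else (C 7%N - ('C((q - 3) %/ 2, 3))%:R) / 8)) /\
  (* (8) *)
  (((q %% 9 = 4)%N \/ (q %% 9 = 7)%N) -> (13 <= q)%N -> d = 11%N ->
     P = (if (lam %% 3 == 0)%N then (C 8%N + 2 * ('C((q - 4) %/ 3, 2))%:R) / 9
          else (C 8%N - ('C((q - 4) %/ 3, 2))%:R) / 9)) /\
  (* (9) *)
  ((q %% 4 = 1)%N -> (9 <= q)%N -> d = 6%N ->
     P = (if (lam %% 4 == 0)%N then (C 3%N + (qQ - 7) / 2) / 4
          else if (lam %% 2 == 1)%N then (C 3%N - (qQ - 3) / 2) / 4
          else (C 3%N + (qQ + 1) / 2) / 4)).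
Proof.
move=> q _ _ _ _ _ _ _ P C qQ.
split; first by move=> h1 h2 hd; subst d; exact: case1.
split; first by move=> h1 h2 hd; subst d; exact: case2.
split; first by move=> h1 h2 hd; subst d; exact: case3.
split; first by move=> h1 h2 hd; subst d; exact: case4.
split; first by move=> h1 h2 hd; subst d; exact: case5.
split; first by move=> h1 h2 hd; subst d; exact: case6.
split; first by move=> h1 h2 hd; subst d; exact: case7.
split; first by move=> h1 h2 hd; subst d; exact: case8.
by move=> h1 h2 hd; subst d; exact: case9r.
Qed.
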